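(* Let $K$ be a finitely generated ring and $I$ a two-sided ideal of $K$ such that the additive group of $K/I$ is finitely generated. Then $I$ is finitely generated as a ring.
   Context: Rings are associative and not necessarily unital; ''finitely generated ring'' means generated as a ring by finitely many elements. *)

(* Defs.v *)
(* Rings are associative, not necessarily unital:
   a Z-module (zmodType) with an associative, biadditive multiplication. *)
From HB Require Import structures.
From mathcomp Require Import all_boot all_algebra.
Set Implicit Arguments. Unset Strict Implicit. Unset Printing Implicit Defensive.
Import GRing.Theory.
Local Open Scope ring_scope.

Definition nu_ring_axioms (K : zmodType) (mul : K -> K -> K) : Prop :=
  [/\ forall x y z, mul x (mul y z) = mul (mul x y) z,
      forall x y z, mul (x + y) z = mul x z + mul y z
    & forall x y z, mul x (y + z) = mul x y + mul x z].

Definition two_sided_ideal (K : zmodType) (mul : K -> K -> K) (I : K -> Prop) : Prop :=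
  [/\ I 0, (forall x y, I x -> I y -> I (x - y)),
      (forall a x, I x -> I (mul a x))
    & (forall a x, I x -> I (mul x a))].

Inductive ring_gen (K : zmodType) (mul : K -> K -> K) (s : seq K) : K -> Prop :=
  | rg_in x : x \in s -> ring_gen mul s x
  | rg_0 : ring_gen mul s 0
  | rg_sub x y : ring_gen mul s x -> ring_gen mul s y -> ring_gen mul s (x - y)
  | rg_mul x y : ring_gen mul s x -> ring_gen mul s y -> ring_gen mul s (mul x y).

Inductive add_gen (K : zmodType) (s : seq K) : K -> Prop :=
  | ag_in x : x \in s -> add_gen s x
  | ag_0 : add_gen s 0
  | ag_sub x y : add_gen s x -> add_gen s y -> add_gen s (x - y).

Definition fg_ring (K : zmodType) (mul : K -> K -> K) : Prop :=
  exists s : seq K, forall x, ring_gen mul s x.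

(* The additive group of K/I is finitely generated: finitely many classes
   t_i + I generate K/I, i.e. every x is in span_Z(t) + I. *)
Definition fg_quotient_additive (K : zmodType) (I : K -> Prop) : Prop :=
  exists t : seq K, forall x, exists y, add_gen t y /\ I (x - y).

Definition fg_subring (K : zmodType) (mul : K -> K -> K) (I : K -> Prop) : Prop :=
  exists u : seq K, (forall x, x \in u -> I x) /\ (forall x, I x <-> ring_gen mul u x).

(* Main.v *)
Require Import Defs.
From mathcomp Require Import all_boot all_algebra.
From Stdlib Require Import Classical.
From mathcomp Require Import zify.
Set Implicit Arguments. Unset Strict Implicit. Unset Printing Implicit Defensive.
Import GRing.Theory Num.Theory.
Local Open Scope ring_scope.

Definition subgrp (K : zmodType) (P : K -> Prop) :=
  P 0 /\ (forall x y, P x -> P y -> P (x - y)).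

Lemma subgrpN (K : zmodType) (P : K -> Prop) : subgrp P -> forall x, P x -> P (- x).
Proof. move=> [P0 PB] x Px; rewrite -sub0r; exact: PB. Qed.

Lemma subgrpD (K : zmodType) (P : K -> Prop) : subgrp P -> forall x y, P x -> P y -> P (x + y).
Proof.
move=> H x y Px Py; rewrite -[y]opprK; apply: H.2 => //; exact: subgrpN.
Qed.

Lemma subgrpZ (K : zmodType) (P : K -> Prop) : subgrp P -> forall x k, P x -> P (x *~ k).
Proof.
move=> H x k Px.
have Hn : forall n : nat, P (x *+ n).
  elim=> [|n IH]; first by rewrite mulr0n; exact: H.1.
  by rewrite mulrS; apply: subgrpD.
case: k => n; first exact: Hn.
rewrite NegzE mulrNz; apply: subgrpN => //; exact: Hn.
Qed.

Lemma add_gen_subgrp (K : zmodType) (s : seq K) : subgrp (add_gen s).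
Proof. split; [exact: ag_0 | move=> x y; exact: ag_sub]. Qed.

Lemma ring_gen_subgrp (K : zmodType) mul (s : seq K) : subgrp (ring_gen mul s).
Proof. split; [exact: rg_0 | move=> x y; exact: rg_sub]. Qed.

Lemma gen_add (K K' : zmodType) (f : K -> K') (P : K' -> Prop) (t : seq K) :
  subgrp P -> (forall x y, f (x - y) = f x - f y) ->
  (forall a, a \in t -> P (f a)) -> forall y, add_gen t y -> P (f y).
Proof.
move=> HP fB Ht y; elim => [x xt | | x z _ IHx _ IHz].
- exact: Ht.
- have -> : f 0 = 0 by rewrite -(subrr 0) fB subrr.
  exact: HP.1.
- rewrite fB; exact: HP.2.
Qed.

Lemma add_gen_mono (K : zmodType) (s s' : seq K) :
  (forall x, x \in s -> add_gen s' x) -> forall y, add_gen s y -> add_gen s' y.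
Proof.
move=> H y Hy; apply: (@gen_add K K id (add_gen s') s) => //.
exact: add_gen_subgrp.
Qed.

Lemma add_gen_cons (K : zmodType) (a : K) (t : seq K) x :
  add_gen (a :: t) x <-> exists k y, add_gen t y /\ x = a *~ k + y.
Proof.
split.
- elim => [z | | z w _ [k1 [y1 [H1 ->]]] _ [k2 [y2 [H2 ->]]]].
  + rewrite in_cons => /orP [/eqP -> | zt].
    * by exists 1, 0; split; [exact: ag_0 | rewrite addr0].
    * by exists 0, z; split; [exact: ag_in | rewrite mulr0z add0r].
  + by exists 0, 0; split; [exact: ag_0 | rewrite mulr0z addr0].
  + exists (k1 - k2), (y1 - y2); split; first exact: ag_sub.
    by rewrite mulrzBr opprD addrACA.
- move=> [k [y [Hy ->]]]; apply: (subgrpD (add_gen_subgrp _)).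
  + apply: subgrpZ; first exact: add_gen_subgrp.
    by apply: ag_in; rewrite mem_head.
  + apply: (add_gen_mono _ Hy) => z zt; apply: ag_in.
    by rewrite in_cons zt orbT.
Qed.

Lemma ex_minimal (P : nat -> Prop) : (exists n, P n) ->
  exists n, P n /\ forall m, (m < n)%N -> ~ P m.
Proof.
move=> [n Pn].
suff H : forall N n, (n <= N)%N -> P n -> exists n, P n /\ forall m, (m < n)%N -> ~ P m.
  exact: (H n n).
elim=> [|N IH] k Hk Pk.
- exists k; split => // m Hm; move: Hk Hm; case: k {Pk} => //.
- case: (classic (exists m, (m < k)%N /\ P m)) => [[m [Hm Pm]] | Hno].
  + apply: (IH m) => //; move: Hk Hm; lia.
  + exists k; split => // m Hm Pm; apply: Hno; by exists m.
Qed.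

Lemma int_subgrp_gen (D : int -> Prop) : subgrp D ->
  exists d, D d /\ forall k, D k -> (d %| k)%Z.
Proof.
move=> HD.
case: (classic (exists n : nat, (0 < n)%N /\ D n)) => [Hex | Hno].
- have [n [[n0 Dn] Hmin]] := ex_minimal Hex.
  exists n; split => // k Dk; apply/dvdz_mod0P.
  have Hr : D (k %% n)%Z.
    have -> : (k %% n)%Z = k - (n%:Z) *~ (k %/ n)%Z.
      by apply/esym/eqP; rewrite -mulrzr intz mulrC subr_eq addrC -divz_eq.
    apply: HD.2 => //; exact: subgrpZ.
  have Hn0 : (n : int) != 0 by rewrite eqz_nat -lt0n.
  have Hn0' : (0 < (n : int)) by rewrite ltz_nat.
  have := modz_ge0 k Hn0; have := ltz_pmod k Hn0'.
  case: (k %% n)%Z Hr => // m Dm Hlt _.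
  case: m Dm Hlt => // m Dm Hlt; exfalso.
  apply: (Hmin m.+1) => //.
- exists 0; split; first exact: HD.1.
  move=> k Dk; rewrite dvd0z; apply/eqP; apply: NNPP => Hk.
  apply: Hno; case: k Dk Hk => n Dn Hn.
  + exists n; split => //; case: n {Dn} Hn => //.
  + exists n.+1; split => //; have := subgrpN HD Dn; by rewrite NegzE opprK.
Qed.

Lemma sub_fg (K : zmodType) (P : K -> Prop) (t : seq K) : subgrp P ->
  exists w, (forall x, x \in w -> P x) /\
            forall x, add_gen t x -> P x -> add_gen w x.
Proof.
move=> HP; elim: t => [|a t [w' [Hw'P Hw']]].
- exists [::]; split; first by [].
  move=> x Hx _.
  suff -> : x = 0 by exact: ag_0.
  elim: Hx => [z|//|z y _ -> _ ->]; by rewrite ?in_nil ?subrr.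
- pose D k := exists y, add_gen t y /\ P (a *~ k + y).
  have HD : subgrp D.
    split; first by exists 0; split; [exact: ag_0 | rewrite mulr0z addr0; exact: HP.1].
    move=> k1 k2 [y1 [H1 P1]] [y2 [H2 P2]]; exists (y1 - y2); split; first exact: ag_sub.
    by rewrite mulrzBr; have := HP.2 _ _ P1 P2; rewrite opprD addrACA.
  have [d [[y0 [Hy0 Pd]] Hdiv]] := int_subgrp_gen HD.
  exists (a *~ d + y0 :: w'); split.
  + move=> x; rewrite in_cons => /orP [/eqP -> // | xw]; exact: Hw'P.
  + move=> x /add_gen_cons [k [y [Hy ->]]] Px.
    have /dvdzP [q Hq] := Hdiv k (ex_intro _ y (conj Hy Px)).
    have Heq : a *~ k + y - (a *~ d + y0) *~ q = y - y0 *~ q.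
      by rewrite mulrzDl -mulrzA mulrC -Hq opprD addrACA subrr add0r.
    have Hsub : add_gen w' (y - y0 *~ q).
      apply: Hw'.
      * apply: ag_sub => //; apply: subgrpZ => //; exact: add_gen_subgrp.
      * rewrite -Heq; apply: HP.2 => //; apply: subgrpZ => //.
    rewrite -(subrK ((a *~ d + y0) *~ q) (a *~ k + y)) Heq.
    apply: (subgrpD (add_gen_subgrp _)).
    * apply: (add_gen_mono _ Hsub) => z zw; apply: ag_in; by rewrite in_cons zw orbT.
    * apply: subgrpZ; first exact: add_gen_subgrp.
      by apply: ag_in; rewrite mem_head.
Qed.

Lemma seq_pick (K : eqType) (l : seq K) (R : K -> K -> Prop) :
  (forall x, x \in l -> exists z, R x z) ->
  exists l' : seq K, (forall x, x \in l -> exists z, z \in l' /\ R x z) /\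
             (forall z, z \in l' -> exists x, R x z).
Proof.
elim: l => [|a l IH] H; first by exists [::]; split.
have [l' [H1 H2]] : exists l' : seq K, (forall x, x \in l -> exists z, z \in l' /\ R x z) /\
             (forall z, z \in l' -> exists x, R x z).
  by apply: IH => x xl; apply: H; rewrite in_cons xl orbT.
have [z Rz] := H a (mem_head _ _).
exists (z :: l'); split.
- move=> x; rewrite in_cons => /orP [/eqP -> | xl].
  + by exists z; rewrite mem_head.
  + by have [z' [z'l Rz']] := H1 x xl; exists z'; rewrite in_cons z'l orbT.
- move=> z'; rewrite in_cons => /orP [/eqP -> | ].
  + by exists a.
  + exact: H2.
Qed.

Theorem proposition2 (K : zmodType) (mul : K -> K -> K) (I : K -> Prop) :
  nu_ring_axioms mul ->
  fg_ring mul ->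
  two_sided_ideal mul I ->
  fg_quotient_additive I ->
  fg_subring mul I.
Proof.
move=> [mA mDl mDr] [s Hs] [I0 IB IL IR] [t Ht].
have mBl : forall x y z, mul (x - y) z = mul x z - mul y z.
  by move=> x y z; apply/eqP; rewrite eq_sym subr_eq -mDl subrK.
have mBr : forall x y z, mul z (x - y) = mul z x - mul z y.
  by move=> x y z; apply/eqP; rewrite eq_sym subr_eq -mDr subrK.
have HI : subgrp I by split.
pose Q x z := I z /\ exists y, add_gen t y /\ x = y + z.
have hQ : forall x, exists z, Q x z.
  move=> x; have [y [Hy Iy]] := Ht x; exists (x - y); split => //.
  by exists y; split => //; rewrite addrC subrK.
have [A [HA1 HA2]] := @seq_pick K s Q (fun x _ => hQ x).
have [B [HB1 HB2]] := @seq_pick K [seq mul a b | a <- t, b <- t] Q (fun x _ => hQ x).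
have [W [HW1 HW2]] := sub_fg t HI.
pose base := A ++ B ++ W.
pose S1 := [seq mul a g | a <- t, g <- base].
pose S2 := [seq mul g a | a <- t, g <- base].
pose S3 := [seq mul c b | c <- S1, b <- t].
pose u := base ++ S1 ++ S2 ++ S3.
pose RG := ring_gen mul u.
have RGs : subgrp RG := ring_gen_subgrp mul u.
have RGD := subgrpD RGs.
have hbase : forall g, g \in base -> RG g.
  by move=> g gb; apply: rg_in; rewrite mem_cat gb.
have hu1 : forall a g, a \in t -> g \in base -> RG (mul a g).
  by move=> a g aIt gb; apply: rg_in; rewrite !mem_cat (allpairs_f _ aIt gb) orbT.
have hu2 : forall a g, a \in t -> g \in base -> RG (mul g a).
  move=> a g aIt gb; apply: rg_in; rewrite !mem_cat.
  by rewrite (allpairs_f (fun a g => mul g a) aIt gb) !orbT.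
have hu3 : forall a g b, a \in t -> g \in base -> b \in t -> RG (mul (mul a g) b).
  move=> a g b aIt gb bt; apply: rg_in; rewrite !mem_cat.
  by rewrite (allpairs_f (fun c b => mul c b) (allpairs_f _ aIt gb) bt) !orbT.
have hB : forall a a', a \in t -> a' \in t ->
    exists y b, [/\ add_gen t y, b \in base & mul a a' = y + b].
  move=> a a' aIt a't.
  have [z [zB [_ [y [Hy ->]]]]] := HB1 _ (allpairs_f mul aIt a't).
  by exists y, z; split => //; rewrite /base !mem_cat zB orbT.
have hgen : forall f : K -> K, (forall x y, f (x - y) = f x - f y) ->
    (forall a, a \in t -> RG (f a)) -> forall y, add_gen t y -> RG (f y).
  move=> f fB Hf y Hy; exact: (gen_add RGs fB Hf Hy).
have m0r : forall a, mul a 0 = 0.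
  by move=> a; rewrite -(subrr 0) mBr !subrr.
have L : forall r, RG r -> forall a, a \in t -> RG (mul a r) /\ RG (mul r a).
  move=> r; elim => [x xu | | x y _ IHx _ IHy | x y Hx IHx Hy IHy] a aIt.
  - rewrite !mem_cat in xu.
    case/orP: xu => [xb | /orP [/allpairsP [[a' g] [/= a't gb ->]] |
                     /orP [/allpairsP [[a' g] [/= a't gb ->]] |
                     /allpairsP [[c b'] [/= /allpairsP [[a' g] [/= a't gb ->]] b't ->]]]]].
    + have xb' : x \in base by rewrite !mem_cat.
      by split; [apply: hu1 | apply: hu2].
    + split; last exact: hu3.
      rewrite mA; have [y [b [Hy bb ->]]] := hB a a' aIt a't.
      rewrite mDl; apply: RGD; last by apply: rg_mul; apply: hbase.
      apply: (hgen (fun z => mul z g) _ _ y Hy) => [x1 y1|a'' a''t]; [exact: mBl | exact: hu1].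
    + split; first by rewrite mA; exact: hu3.
      rewrite -mA; have [y [b [Hy bb ->]]] := hB a' a a't aIt.
      rewrite mDr; apply: RGD; last by apply: rg_mul; apply: hbase.
      apply: (hgen (fun z => mul g z) _ _ y Hy) => [x1 y1|a'' a''t]; [exact: mBr | exact: hu2].
    + split.
      * rewrite mA mA; have [y [b [Hy bb ->]]] := hB a a' aIt a't.
        rewrite mDl mDl; apply: RGD.
        - apply: (hgen (fun z => mul (mul z g) b') _ _ y Hy) => [x1 y1|a'' a''t].
            by rewrite !mBl.
          exact: hu3.
        - by rewrite -mA; apply: rg_mul; [apply: hbase | apply: hu2].
      * rewrite -mA; have [y [b [Hy bb ->]]] := hB b' a b't aIt.
        rewrite mDr; apply: RGD.
        - apply: (hgen (fun z => mul (mul a' g) z) _ _ y Hy) => [x1 y1|a'' a''t].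
            exact: mBr.
          exact: hu3.
        - by apply: rg_mul; [apply: hu1 | apply: hbase].
  - by rewrite m0r -(subrr 0) mBl !subrr; split; exact: rg_0.
  - have [H1 H2] := IHx a aIt; have [H3 H4] := IHy a aIt.
    by rewrite mBr mBl; split; apply: rg_sub.
  - have [H1 H2] := IHx a aIt; have [H3 H4] := IHy a aIt.
    by split; [rewrite mA | rewrite -mA]; apply: rg_mul.
have L2 : forall y r, add_gen t y -> RG r -> RG (mul y r) /\ RG (mul r y).
  move=> y r Hy Hr; split.
  - apply: (hgen (fun z => mul z r) _ _ y Hy) => [x1 y1|a aIt]; [exact: mBl | exact: (L r Hr a aIt).1].
  - apply: (hgen (fun z => mul r z) _ _ y Hy) => [x1 y1|a aIt]; [exact: mBr | exact: (L r Hr a aIt).2].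
pose SP z := exists y r, [/\ add_gen t y, RG r & z = y + r].
have SPs : subgrp SP.
  split; first by exists 0, 0; split; [exact: ag_0 | exact: rg_0 | rewrite addr0].
  move=> x1 x2 [y1 [r1 [H1 H2 ->]]] [y2 [r2 [H3 H4 ->]]].
  exists (y1 - y2), (r1 - r2); split; [exact: ag_sub | exact: rg_sub |].
  by rewrite opprD addrACA.
have hQQ : forall y1 y2, add_gen t y1 -> add_gen t y2 -> SP (mul y1 y2).
  move=> y1 y2 H1 H2.
  apply: (gen_add SPs (f := fun z => mul z y2) _ _ H1) => [x1 x2|a aIt]; first exact: mBl.
  apply: (gen_add SPs (f := fun z => mul a z) _ _ H2) => [x1 x2|a' a't]; first exact: mBr.
  have [y [b [Hy bb ->]]] := hB a a' aIt a't.
  by exists y, b; split => //; apply: hbase.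
have hS : forall x, ring_gen mul s x -> SP x.
  move=> x; elim => [z zs | | x1 x2 _ H1 _ H2 | x1 x2 _ H1 _ H2].
  - have [z' [z'A [_ [y [Hy ->]]]]] := HA1 z zs.
    by exists y, z'; split => //; apply: hbase; rewrite mem_cat z'A.
  - exact: SPs.1.
  - exact: SPs.2.
  - move: H1 H2 => [y1 [r1 [Hy1 Hr1 ->]]] [y2 [r2 [Hy2 Hr2 ->]]].
    rewrite mDl !mDr.
    have [y [r [Hy Hr ->]]] := hQQ y1 y2 Hy1 Hy2.
    exists y, (r + mul y1 r2 + (mul r1 y2 + mul r1 r2)); split => //.
    + apply: (RGD _ _); first by apply: (RGD _ _) => //; exact: (L2 _ _ Hy1 Hr2).1.
      apply: (RGD _ _); [exact: (L2 _ _ Hy2 Hr1).2 | exact: rg_mul].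
    + by rewrite -!addrA.
have RGI : forall x, RG x -> I x.
  move=> x; elim => [z zu | | x1 x2 _ H1 _ H2 | x1 x2 _ H1 _ H2].
  - have hbI : forall g, g \in base -> I g.
      move=> g; rewrite !mem_cat => /orP [gA | /orP [gB | gW]].
      + by have [x0 [Ig _]] := HA2 g gA.
      + by have [x0 [Ig _]] := HB2 g gB.
      + exact: HW1.
    move: zu; rewrite mem_cat => /orP [/hbI // | ].
    rewrite !mem_cat => /orP [/allpairsP [[a g] [/= _ gb ->]] |
                     /orP [/allpairsP [[a g] [/= _ gb ->]] |
                     /allpairsP [[c b'] [/= /allpairsP [[a g] [/= _ gb ->]] _ ->]]]].
    + by apply: IL; apply: hbI.
    + by apply: IR; apply: hbI.
    + by apply: IR; apply: IL; apply: hbI.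
  - exact: I0.
  - exact: IB.
  - exact: IL.
exists u; split; first by move=> x xu; apply: RGI; apply: rg_in.
move=> x; split; last exact: RGI.
move=> Ix; have [y [r [Hy Hr Hx]]] := hS x (Hs x).
have Iy : I y by have := IB _ _ Ix (RGI _ Hr); rewrite Hx addrK.
have HyW := HW2 y Hy Iy.
rewrite Hx; apply: RGD => //.
apply: (gen_add RGs (f := id) _ _ HyW) => // a aW.
by apply: hbase; rewrite !mem_cat aW !orbT.
Qed.
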